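(* Let $f,g:[0,1]^d\to\mathbb{R}$ have bounded HK$\mathbf{0}$-variation. Then for all $\mathbf{a},\mathbf{b}\in[0,1]^d$ with $\mathbf{a}\le\mathbf{b}$, $$\operatorname{Var}_{HK\mathbf{0}}(f+g;[\mathbf{0},\mathbf{b}])-\operatorname{Var}_{HK\mathbf{0}}(f+g;[\mathbf{0},\mathbf{a}])\le\operatorname{Var}_{HK\mathbf{0}}(f;[\mathbf{0},\mathbf{b}])+\operatorname{Var}_{HK\mathbf{0}}(g;[\mathbf{0},\mathbf{b}])-\operatorname{Var}_{HK\mathbf{0}}(f;[\mathbf{0},\mathbf{a}])-\operatorname{Var}_{HK\mathbf{0}}(g;[\mathbf{0},\mathbf{a}]).$$
   Context: For a box $[\mathbf{c},\mathbf{e}]$, $\Delta(f;[\mathbf{c},\mathbf{e}])$ is the alternating sum $\sum_{j\in\{0,1\}^s}(-1)^{\sum j_i}f$ over its vertices (sign $+$ at $\mathbf{e}$). The Vitali variation of $f$ on a box is the supremum over grid partitions of the box (generated by one-dimensional partitions of each coordinate interval) of $\sum|\Delta(f;A)|$ over cells $A$. For $\mathbf{a}\in[0,1]^d$, $\mathbf{a}\ne\mathbf{0}$, $\operatorname{Var}_{HK\mathbf{0}}(f;[\mathbf{0},\mathbf{a}])$ is the sum over all nonempty $\{i_1<\dots<i_s\}\subseteq\{1,\dots,d\}$ of the $s$-dimensional Vitali variation of $f$ restricted to the face $\{\mathbf{x}\in[\mathbf{0},\mathbf{a}]:x_j=0\text{ for }j\notin\{i_1,\dots,i_s\}\}$ (degenerate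 faces contributing $0$), and $\operatorname{Var}_{HK\mathbf{0}}(f;[\mathbf{0},\mathbf{0}])=0$. $f$ has bounded HK$\mathbf{0}$-variation if $\operatorname{Var}_{HK\mathbf{0}}(f;[0,1]^d)<\infty$. *)

(* Defs.v *)
From HB Require Import structures.
From mathcomp Require Import all_boot all_order all_algebra.
From mathcomp Require Import all_classical all_reals ereal.
Set Implicit Arguments. Unset Strict Implicit. Unset Printing Implicit Defensive.
Import Order.TTheory GRing.Theory Num.Theory.
Local Open Scope ring_scope.

Definition is_partition (R : realType) (lo hi : R) (s : seq R) : bool :=
  [&& (1 < size s)%N, sorted <%R s, head 0 s == lo & last 0 s == hi].

(* Coordinates outside S are those of c, e
   (which will both be 0 on the face). *)
Definition delta (R : realType) (d : nat) (S : {set 'I_d})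
  (f : ('I_d -> R) -> R) (c e : 'I_d -> R) : R :=
  \sum_(J in powerset S) (-1) ^+ #|J| * f (fun i => if i \in J then c i else e i).

(* Sum of |Delta| over the cells of the grid partition generated by the
   one-dimensional partitions P i (i in S) of the face
   {x in [0,a] : x_j = 0 for j notin S}. *)
Definition grid_sum (R : realType) (d : nat) (S : {set 'I_d})
  (f : ('I_d -> R) -> R) (P : 'I_d -> seq R) : R :=
  let M := (\max_(i : 'I_d) size (P i))%N in
  \sum_(k : {ffun 'I_d -> 'I_M} |
          [forall i, if i \in S then (val (k i) < (size (P i)).-1)%N
                     else val (k i) == 0%N])
    `| delta S f (fun i => if i \in S then nth 0 (P i) (k i) else 0)
                 (fun i => if i \in S then nth 0 (P i) (k i).+1 else 0) |.

Definition vitali_face (R : realType) (d : nat) (f : ('I_d -> R) -> R)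
  (S : {set 'I_d}) (a : 'I_d -> R) : \bar R :=
  if [exists i in S, a i == 0] then 0%E
  else ereal_sup [set x : \bar R | exists P : 'I_d -> seq R,
          (forall i, i \in S -> is_partition 0 (a i) (P i)) /\
          x = (grid_sum S f P)%:E].

Definition var_HK0 (R : realType) (d : nat) (f : ('I_d -> R) -> R)
  (a : 'I_d -> R) : \bar R :=
  (\sum_(S : {set 'I_d} | S != finset.set0) vitali_face f S a)%E.

(* Main.v *)
Require Import Defs.
From HB Require Import structures.
From mathcomp Require Import all_boot all_order all_algebra.
From mathcomp Require Import all_classical all_reals ereal.
From mathcomp Require Import ring lra.
Set Implicit Arguments. Unset Strict Implicit. Unset Printing Implicit Defensive.
Import Order.TTheory GRing.Theory Num.Theory.
Local Open Scope ring_scope.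

Section Aux.
Variable R : realType.

Fixpoint ps (F : R -> R -> R) (x : R) (s : seq R) : R :=
  match s with [::] => 0 | y :: s' => F x y + ps F y s' end.
Definition pairsum F (s : seq R) : R :=
  match s with [::] => 0 | x :: s' => ps F x s' end.

Lemma ps_ge0 F x s : (forall u v, 0 <= F u v) -> 0 <= ps F x s.
Proof. move=> H; elim: s x => [|y s IH] x //=; exact: addr_ge0. Qed.

Lemma pairsum_ge0 F s : (forall u v, 0 <= F u v) -> 0 <= pairsum F s.
Proof. by case: s => //= x s; apply: ps_ge0. Qed.

Lemma ps_le F G x s : (forall u v, F u v <= G u v) -> ps F x s <= ps G x s.
Proof. move=> H; elim: s x => [|y s IH] x //=; exact: lerD. Qed.

Lemma pairsum_le F G s : (forall u v, F u v <= G u v) -> pairsum F s <= pairsum G s.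
Proof. by case: s => //= x s; apply: ps_le. Qed.

Lemma psD F G x s : ps (fun u v => F u v + G u v) x s = ps F x s + ps G x s.
Proof. elim: s x => [|y s IH] x /=; first by rewrite addr0. rewrite IH; ring. Qed.

Lemma pairsumD F G s : pairsum (fun u v => F u v + G u v) s = pairsum F s + pairsum G s.
Proof. case: s => /= [|x s]; [by rewrite addr0|exact: psD]. Qed.

Lemma pairsum_ext F G s : (forall u v, F u v = G u v) -> pairsum F s = pairsum G s.
Proof.
move=> H; case: s => //= x s; elim: s x => //= y s IH x; by rewrite H IH.
Qed.

Lemma pairsum_take_drop F s i :
  pairsum F s = pairsum F (take i.+1 s) + pairsum F (drop i s).
Proof.
case: s => [|x s] /=; first by rewrite addr0.
elim: s x i => [|y s IH] x [|i] /=; rewrite ?addr0 ?add0r //.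
by rewrite (IH y i) addrA.
Qed.

Lemma ps_refine F x s s' :
  (forall u t v, F u v <= F u t + F t v) -> (forall u v, 0 <= F u v) ->
  subseq s s' -> last x s = last x s' -> ps F x s <= ps F x s'.
Proof.
move=> Hsub H0; elim: s' x s => [|y s' IH] x s.
  by move/eqP=> -> /=.
case: s => [|z s1] /=; first by move=> _ _; apply: addr_ge0 => //; apply: ps_ge0.
case: eqP => [-> Hs Hl|Hzy Hs Hl].
  by apply: lerD => //; apply: IH.
apply: (le_trans (y := F x y + (F y z + ps F z s1))).
  by rewrite addrA; apply: lerD.
apply: lerD => //.
have -> : F y z + ps F z s1 = ps F y (z :: s1) by [].
apply: IH => //.
Qed.

Lemma pairsum_nth F s :
  pairsum F s = \sum_(m < (size s).-1) F (nth 0 s m) (nth 0 s m.+1).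
Proof.
case: s => [|x s] /=; first by rewrite big_ord0.
elim: s x => [|y s IH] x /=; first by rewrite big_ord0.
by rewrite big_ord_recl /= IH.
Qed.

End Aux.
Section Delta.
Variables (R : realType) (d : nat).
Implicit Types (c e : 'I_d -> R) (f g : ('I_d -> R) -> R) (S : {set 'I_d}).

Definition upd c (j : 'I_d) (u : R) : 'I_d -> R := fun i => if i == j then u else c i.

Definition Dfun S j f c e (w : R) : R :=
  \sum_(J in powerset (S :\ j)) (-1) ^+ #|J| *
     f (fun i => if i \in J then c i else if i == j then w else e i).

Lemma delta_split S j f c e : j \in S ->
  delta S f c e = Dfun S j f c e (e j) - Dfun S j f c e (c j).
Proof.
move=> Hj; rewrite /delta. rewrite (bigID (fun J : {set 'I_d} => j \in J)) /= addrC.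
congr (_ + _).
  apply: eq_big => [J|J HJ]; first by rewrite !powersetE subsetD1.
  congr (_ * f _); apply: funext => i; case: ifP => // _.
  by case: eqP => // ->.
rewrite (reindex_onto (fun J => j |: J) (fun J => J :\ j)); last first.
  by move=> J /andP [_ HJ]; rewrite finset.setD1K.
rewrite /Dfun -sumrN; apply: eq_big => [J|J].
  apply/idP/idP.
    move=> /andP [/andP [Hs _] /eqP He].
    have nj : j \notin J by rewrite -He !inE eqxx.
    rewrite powersetE subsetD1 nj andbT.
    rewrite powersetE in Hs; apply: (fintype.subset_trans _ Hs); exact: finset.subsetUr.
  rewrite powersetE subsetD1 => /andP [Hs Hn].
  by rewrite finset.setU1K // eqxx setU11 andbT powersetE finset.subUset finset.sub1set Hj Hs.
move=> /andP [_ /eqP He]; have Hn : j \notin J by rewrite -He !inE eqxx.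
rewrite cardsU1 Hn /= exprS mulN1r mulNr; congr (- (_ * f _)).
apply: funext => i; rewrite !inE; case: (i \in J); rewrite ?orbT //= orbF.
by case: eqP => // ->.
Qed.

Lemma Dfun_upd S j f c e u v : Dfun S j f (upd c j u) (upd e j v) = Dfun S j f c e.
Proof.
apply: funext => w; apply: eq_bigr => J; rewrite powersetE subsetD1 => /andP [_ Hn].
congr (_ * f _); apply: funext => i; rewrite /upd.
case: ifP => HiJ; first by case: eqP => // Hij; move: Hn; rewrite -Hij HiJ.
by case: eqP.
Qed.

Lemma delta_add S j f c e u t v : j \in S ->
  delta S f (upd c j u) (upd e j v) =
  delta S f (upd c j u) (upd e j t) + delta S f (upd c j t) (upd e j v).
Proof.
move=> Hj; rewrite !(delta_split _ _ _ Hj) !Dfun_upd /upd !eqxx; ring.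
Qed.

Lemma deltaD S f g c e :
  delta S (fun x => f x + g x) c e = delta S f c e + delta S g c e.
Proof. rewrite /delta -big_split /=; apply: eq_bigr => J _; ring. Qed.

End Delta.

Section GS.
Variables (R : realType) (d : nat) (S : {set 'I_d}).
Implicit Types (c e : 'I_d -> R) (f g h : ('I_d -> R) -> R) (P : 'I_d -> seq R).

Fixpoint GS h P (js : seq 'I_d) c e : R :=
  match js with
  | [::] => `|delta S h c e|
  | j :: js' => pairsum (fun u v => GS h P js' (upd c j u) (upd e j v)) (P j)
  end.

Lemma GS_ge0 h P js c e : 0 <= GS h P js c e.
Proof. elim: js c e => [|j js IH] c e /=; [exact: normr_ge0| exact: pairsum_ge0]. Qed.

Lemma GS_subf f g P js c e :
  GS (fun x => f x + g x) P js c e <= GS f P js c e + GS g P js c e.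
Proof.
elim: js c e => [|j js IH] c e /=; first by rewrite deltaD ler_normD.
rewrite -pairsumD; exact: pairsum_le.
Qed.

Lemma upd_comm c i j u u' : i != j -> upd (upd c j u) i u' = upd (upd c i u') j u.
Proof.
move=> Hij; apply: funext => k; rewrite /upd.
case: (eqVneq k i) => [->|]; last by [].
by rewrite (negbTE Hij).
Qed.

Lemma upd_upd c j u u' : upd (upd c j u) j u' = upd c j u'.
Proof. by apply: funext => k; rewrite /upd; case: eqP. Qed.

Lemma GS_coord h P js c e j u t v : j \in S -> j \notin js ->
  GS h P js (upd c j u) (upd e j v) <=
  GS h P js (upd c j u) (upd e j t) + GS h P js (upd c j t) (upd e j v).
Proof.
move=> HjS; elim: js c e => [|i js IH] c e /=.
  by move=> _; rewrite (@delta_add _ _ S j h c e u t v HjS) ler_normD.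
rewrite inE negb_or => /andP [Hji Hj]; rewrite -pairsumD; apply: pairsum_le => u' v'.
have Hij : i != j by rewrite eq_sym.
rewrite !(upd_comm _ _ _ Hij); exact: IH.
Qed.

Definition refines (p p' : seq R) : bool :=
  match p, p' with
  | x :: s, x' :: s' => [&& x == x', subseq s s' & last x s == last x' s']
  | _, _ => false
  end.

Lemma GS_refine h P P' js c e :
  {subset js <= S} -> uniq js -> (forall j, j \in js -> refines (P j) (P' j)) ->
  GS h P js c e <= GS h P' js c e.
Proof.
elim: js c e => [|j js IH] c e //= Hsub /andP [Hn Hu] Hr.
apply: (le_trans (y := pairsum (fun u v => GS h P' js (upd c j u) (upd e j v)) (P j))).
  apply: pairsum_le => u v; apply: IH => //.
    by move=> k Hk; apply: Hsub; rewrite inE Hk orbT.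
  by move=> k Hk; apply: Hr; rewrite inE Hk orbT.
have := Hr j (mem_head _ _); have HjS : j \in S by apply: Hsub; exact: mem_head.
case: (P j) => [|x s] //; case: (P' j) => [|x' s'] // /and3P [/eqP <- Hss /eqP Hl].
apply: ps_refine => //.
- move=> u t0 v; exact: GS_coord.
- move=> u v; exact: GS_ge0.
Qed.

Fixpoint Out h P (ix : 'I_d -> nat) (js : seq 'I_d) c e : R :=
  match js with
  | [::] => 0
  | j :: js' =>
      pairsum (fun u v => Out h P ix js' (upd c j u) (upd e j v)) (take (ix j).+1 (P j)) +
      pairsum (fun u v => GS h P js' (upd c j u) (upd e j v)) (drop (ix j) (P j))
  end.

Lemma GS_split h P ix js c e :
  GS h P js c e = GS h (fun i => take (ix i).+1 (P i)) js c e + Out h P ix js c e.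
Proof.
elim: js c e => [|j js IH] c e /=; first by rewrite addr0.
rewrite (pairsum_take_drop _ _ (ix j)) addrA -pairsumD; congr (_ + _).
by apply: pairsum_ext => u v.
Qed.

Lemma Out_ge0 h P ix js c e : 0 <= Out h P ix js c e.
Proof.
elim: js c e => [|j js IH] c e //=.
apply: addr_ge0; apply: pairsum_ge0 => u v //; exact: GS_ge0.
Qed.

Lemma Out_subf f g P ix js c e :
  Out (fun x => f x + g x) P ix js c e <= Out f P ix js c e + Out g P ix js c e.
Proof.
elim: js c e => [|j js IH] c e /=; first by rewrite addr0.
rewrite addrACA -!pairsumD; apply: lerD; apply: pairsum_le => u v //.
exact: GS_subf.
Qed.

Lemma GS_outside h P js c e c' e' :
  (forall i, i \notin js -> c i = c' i /\ e i = e' i) ->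
  GS h P js c e = GS h P js c' e'.
Proof.
elim: js c e c' e' => [|j js IH] c e c' e' /= H.
  have -> : c = c' by apply: funext => i; case: (H i).
  have -> : e = e' by apply: funext => i; case: (H i).
  by [].
apply: pairsum_ext => u v; apply: IH => i Hi; rewrite /upd.
case: eqP => // /eqP Hij; apply: H; by rewrite inE negb_or Hij Hi.
Qed.

End GS.

Section Nest.
Variables (R : realType) (d M : nat) (n : 'I_d -> nat) (Phi : {ffun 'I_d -> 'I_M} -> R).

Definition fupd (k : {ffun 'I_d -> 'I_M}) (j : 'I_d) (m : 'I_M) : {ffun 'I_d -> 'I_M} :=
  [ffun i => if i == j then m else k i].

Fixpoint NS (js : seq 'I_d) (k : {ffun 'I_d -> 'I_M}) : R :=
  match js with
  | [::] => Phi k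
  | j :: js' => \sum_(m : 'I_M | (m < n j)%N) NS js' (fupd k j m)
  end.

Lemma ffun_nest js (k0 : {ffun 'I_d -> 'I_M}) : uniq js ->
  \sum_(k : {ffun 'I_d -> 'I_M} | [forall i, if i \in js then (k i < n i)%N else k i == k0 i]) Phi k
  = NS js k0.
Proof.
elim: js k0 => [|j js IH] k0 /=.
  move=> _; apply: big_pred1 => k /=; apply/forallP/eqP.
    by move=> H; apply/ffunP => i; apply/eqP; apply: H.
  by move=> ->.
move=> /andP [Hn Hu].
rewrite (partition_big (fun k : {ffun 'I_d -> 'I_M} => k j) (fun m : 'I_M => (m < n j)%N)); last first.
  by move=> k /forallP /(_ j); rewrite mem_head.
apply: eq_bigr => m Hm; rewrite -IH //; apply: eq_bigl => k.
apply/andP/forallP.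
  move=> [/forallP Hc /eqP Hkj] i; rewrite ffunE.
  case: (eqVneq i j) => [->|Hij]; first by rewrite (negbTE Hn) Hkj eqxx.
  by have := Hc i; rewrite inE (negbTE Hij).
move=> Hc; have Hkj : k j == m by have := Hc j; rewrite (negbTE Hn) ffunE eqxx.
split => //; apply/forallP => i; rewrite inE.
case: (eqVneq i j) => [->|Hij] /=; first by rewrite (eqP Hkj).
by have := Hc i; rewrite ffunE (negbTE Hij).
Qed.

End Nest.

Section Link.
Variables (R : realType) (d : nat) (S : {set 'I_d}).

Lemma grid_GS h (P : 'I_d -> seq R) : S != finset.set0 ->
  (forall i, i \in S -> (1 < size (P i))%N) ->
  grid_sum S h P = GS S h P (enum S) (fun _ => 0) (fun _ => 0).
Proof.
move=> HS HP; rewrite /grid_sum /=.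
set M := (\max_(i : 'I_d) size (P i))%N.
have HM : forall i, (size (P i) <= M)%N by move=> i; apply: leq_bigmax.
have M0 : (0 < M)%N.
  case/set0Pn: HS => j Hj.
  by apply: leq_trans (HM j); apply: leq_trans (HP j Hj).
pose k0 : {ffun 'I_d -> 'I_M} := [ffun => Ordinal M0].
pose Phi := fun k : {ffun 'I_d -> 'I_M} =>
  `|delta S h (fun i => if i \in S then nth 0 (P i) (k i) else 0)
              (fun i => if i \in S then nth 0 (P i) (k i).+1 else 0)|.
have E1 : \sum_(k : {ffun 'I_d -> 'I_M} | [forall i, if i \in S then (k i < (size (P i)).-1)%N
                     else val (k i) == 0%N]) Phi k =
   \sum_(k : {ffun 'I_d -> 'I_M} | [forall i, if i \in enum S then (k i < (size (P i)).-1)%N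
                     else k i == k0 i]) Phi k.
  apply: eq_bigl => k; apply: eq_forallb => i; rewrite mem_enum.
  by case: (i \in S) => //; rewrite ffunE.
rewrite E1 (@ffun_nest R d M (fun i => (size (P i)).-1) Phi) ?enum_uniq //.
have NSE : forall js (k : {ffun 'I_d -> 'I_M}), {subset js <= S} ->
  NS (fun i => (size (P i)).-1) Phi js k =
  GS S h P js (fun i => if i \in S then nth 0 (P i) (k i) else 0)
              (fun i => if i \in S then nth 0 (P i) (k i).+1 else 0).
  elim => [|j js IH] k Hsub /=; first by [].
  have HjS := Hsub j (mem_head _ _).
  rewrite pairsum_nth (big_ord_widen M (fun m : nat => GS S h P js (upd _ j (P j)`_m) (upd _ j (P j)`_m.+1))); last exact: (leq_trans (leq_pred _) (HM j)).
  apply: eq_bigr => m _; rewrite IH; last by move=> i Hi; apply: Hsub; rewrite inE Hi orbT.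
  congr GS; apply: funext => i; rewrite /upd /fupd ffunE;
    case: (eqVneq i j) => [->|Hij]; by rewrite ?HjS.
rewrite NSE; last by move=> i; rewrite mem_enum.
apply: GS_outside => i; rewrite mem_enum => Hi; by rewrite (negbTE Hi).
Qed.

End Link.

Section Seqs.
Variable R : realType.
Implicit Types (s p q : seq R) (x y a b : R).

Lemma path_head_le y s x : path <%R y s -> x \in y :: s -> y <= x.
Proof.
move=> Hp; rewrite inE => /orP [/eqP -> //|Hx].
have := order_path_min (@lt_trans _ R) Hp => /allP /(_ x Hx) /ltW //.
Qed.

Lemma path_le_last y s x : path <%R y s -> x \in y :: s -> x <= last y s.
Proof.
elim: s y x => [|z s IH] y x /=.
  by move=> _; rewrite inE => /eqP ->.
move=> /andP [Hyz Hp]; rewrite inE => /orP [/eqP ->|Hx].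
  apply: le_trans (ltW Hyz) _; apply: IH => //; exact: mem_head.
exact: IH.
Qed.

Lemma part_mem a s x : is_partition 0 a s -> x \in s -> 0 <= x <= a.
Proof.
case: s => [|y s] /and4P [_ Hs /eqP Hh /eqP Hl] Hx //=.
simpl in Hh, Hl; rewrite -Hh -Hl.
by rewrite (path_head_le Hs Hx) (path_le_last Hs Hx).
Qed.

Lemma sorted_subseq s1 s2 : sorted <%R s1 -> sorted <%R s2 -> {subset s1 <= s2} ->
  subseq s1 s2.
Proof.
move=> H1 H2 Hsub.
have <- : [seq x <- s2 | x \in s1] = s1.
  apply: lt_sorted_eq => //; first exact: lt_sorted_filter.
  by move=> x; rewrite mem_filter; case Hx: (x \in s1); rewrite ?(Hsub x Hx).
exact: filter_subseq.
Qed.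

Lemma refines_of a p s : is_partition 0 a p -> is_partition 0 a s ->
  {subset p <= s} -> refines p s.
Proof.
case: p => [|x p]; first by case/and4P.
case: s => [|y s]; first by move=> _; case/and4P.
move=> /and4P [_ /= Hp /eqP /= Hx /eqP /= Hlp] /and4P [_ /= Hs /eqP /= Hy /eqP /= Hls] Hsub.
subst x y.
rewrite /refines eqxx /= Hlp Hls eqxx andbT.
apply: sorted_subseq; [exact: path_sorted Hp| exact: path_sorted Hs|].
move=> z Hz; have := Hsub z; rewrite !inE Hz orbT => /(_ isT) /orP [/eqP Hzy|//].
have := order_path_min (@lt_trans _ R) Hp => /allP /(_ z Hz).
by rewrite Hzy ltxx.
Qed.

Lemma partition_of lo hi s : sorted <%R s -> (forall x, x \in s -> lo <= x <= hi) ->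
  lo \in s -> hi \in s -> lo < hi -> is_partition lo hi s.
Proof.
case: s => [//|y s] Hs Hb Hlo Hhi Hlh.
have Hy : y = lo.
  apply/eqP; rewrite eq_le (path_head_le Hs Hlo) /=.
  by case/andP: (Hb y (mem_head _ _)).
have Hl : last y s = hi.
  apply/eqP; rewrite eq_le (path_le_last Hs Hhi) andbT.
  by case/andP: (Hb _ (mem_last y s)).
move: (Hs) => /= Hs'; rewrite /is_partition /= Hs' Hl Hy !eqxx !andbT.
case: s Hs Hb Hlo Hhi Hl Hs' => //= _ _ _ _ Hl _.
move: Hlh; rewrite -Hl Hy ltxx //.
Qed.

Lemma part_head a s : is_partition 0 a s -> 0 \in s.
Proof. by move=> /and4P [Hsz _ /eqP Hh _]; case: s Hsz Hh => //= y s _ <-; exact: mem_head. Qed.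

Lemma part_last a s : is_partition 0 a s -> a \in s.
Proof. by move=> /and4P [Hsz _ _ /eqP Hh]; case: s Hsz Hh => //= y s _ <-; exact: mem_last. Qed.

Definition refine3 q p1 p2 := sort <=%R (undup (q ++ p1 ++ p2)).

Lemma refine3_sorted q p1 p2 : sorted <%R (refine3 q p1 p2).
Proof. by rewrite /refine3 sort_lt_sorted undup_uniq. Qed.

Lemma mem_refine3 q p1 p2 x : (x \in refine3 q p1 p2) = [|| x \in q, x \in p1 | x \in p2].
Proof. by rewrite /refine3 mem_sort mem_undup !mem_cat. Qed.

Lemma refine3_props a b q p1 p2 : 0 < a <= b ->
  is_partition 0 b q -> is_partition 0 a p1 -> is_partition 0 a p2 ->
  let r := refine3 q p1 p2 in
  let ra := take (count (fun x => x <= a) r).-1.+1 r in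
  [/\ is_partition 0 b r, is_partition 0 a ra, refines q r, refines p1 ra & refines p2 ra].
Proof.
move=> /andP [Ha Hab] Hq H1 H2 r ra.
have Hr : sorted <%R r by exact: refine3_sorted.
have Hmem : forall x, x \in r -> 0 <= x <= b.
  move=> x; rewrite mem_refine3 => /or3P [Hx|Hx|Hx].
  - exact: part_mem Hq Hx.
  - by case/andP: (part_mem H1 Hx) => -> /le_trans ->.
  - by case/andP: (part_mem H2 Hx) => -> /le_trans ->.
have H0q : 0 \in q by exact: part_head Hq.
have Hbq : b \in q by exact: part_last Hq.
have Hap : a \in p1 by exact: part_last H1.
have Rpart : is_partition 0 b r.
  apply: partition_of => //; rewrite ?mem_refine3 ?H0q ?Hbq //.
  exact: lt_le_trans Ha Hab.
have Hra : ra = [seq x <- r | x <= a].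
  have Hr' : sorted <=%R r by move: Hr; rewrite lt_sorted_uniq_le => /andP [].
  rewrite (sorted_filter_le a Hr') /ra prednK //.
  rewrite -has_count; apply/hasP; exists 0; last exact: ltW.
  by rewrite mem_refine3 H0q.
have Rapart : is_partition 0 a ra.
  rewrite Hra; apply: partition_of; rewrite ?mem_filter ?lexx ?(ltW Ha) ?mem_refine3 ?H0q ?Hap ?orbT //.
  - exact: lt_sorted_filter.
  - by move=> x; rewrite mem_filter => /andP [Hxa Hx]; rewrite Hxa andbT; case/andP: (Hmem x Hx).
split => //.
- apply: refines_of Hq Rpart _ => x Hx; by rewrite mem_refine3 Hx.
- have HP1 : forall x, x \in p1 -> 0 <= x <= a by move=> x; exact: part_mem H1.
  apply: refines_of H1 Rapart _ => x Hx; rewrite Hra mem_filter mem_refine3 Hx orbT andbT.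
  by case/andP: (HP1 x Hx).
- have HP2 : forall x, x \in p2 -> 0 <= x <= a by move=> x; exact: part_mem H2.
  apply: refines_of H2 Rapart _ => x Hx; rewrite Hra mem_filter mem_refine3 Hx !orbT andbT.
  by case/andP: (HP2 x Hx).
Qed.

End Seqs.

Section Main.
Variables (R : realType) (d : nat).
Implicit Types (S : {set 'I_d}) (x a b : 'I_d -> R) (f g h : ('I_d -> R) -> R)
  (P Q : 'I_d -> seq R).

Definition valid S x P := forall i, i \in S -> is_partition 0 (x i) (P i).
Definition GSS S h P := GS S h P (enum S) (fun _ => 0) (fun _ => 0).

Lemma key S a b Q P1 P2 :
  (forall i, i \in S -> 0 < a i <= b i) -> valid S b Q -> valid S a P1 -> valid S a P2 ->
  exists Rq Ra, [/\ valid S b Rq, valid S a Ra,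
    (forall f g, GSS S (fun x => f x + g x) Q + GSS S f P1 + GSS S g P2 <=
                 GSS S f Rq + GSS S g Rq + GSS S (fun x => f x + g x) Ra)
    & (forall h, GSS S h P1 <= GSS S h Rq)].
Proof.
move=> Hab HQ H1 H2.
pose Rq i := refine3 (Q i) (P1 i) (P2 i).
pose ix i := (count (fun y : R => y <= a i) (Rq i)).-1.
pose Ra i := take (ix i).+1 (Rq i).
have Hp : forall i, i \in S -> [/\ is_partition 0 (b i) (Rq i), is_partition 0 (a i) (Ra i),
    refines (Q i) (Rq i), refines (P1 i) (Ra i) & refines (P2 i) (Ra i)].
  by move=> i Hi; exact: (refine3_props (Hab i Hi) (HQ i Hi) (H1 i Hi) (H2 i Hi)).
have Hsub : {subset enum S <= S} by move=> i; rewrite mem_enum.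
have HU := enum_uniq S.
have RfQ : forall h, GSS S h Q <= GSS S h Rq.
  move=> h; apply: GS_refine => // j /Hsub Hj; by case: (Hp j Hj).
have Rf1 : forall h, GSS S h P1 <= GSS S h Ra.
  move=> h; apply: GS_refine => // j /Hsub Hj; by case: (Hp j Hj).
have Rf2 : forall h, GSS S h P2 <= GSS S h Ra.
  move=> h; apply: GS_refine => // j /Hsub Hj; by case: (Hp j Hj).
have Sp : forall h, GSS S h Rq = GSS S h Ra + Out S h Rq ix (enum S) (fun _ => 0) (fun _ => 0).
  move=> h; exact: GS_split.
exists Rq, Ra; split.
- by move=> i Hi; case: (Hp i Hi).
- by move=> i Hi; case: (Hp i Hi).
- move=> f g.
  have := RfQ (fun x => f x + g x); have := Rf1 f; have := Rf2 g.
  rewrite !Sp.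
  have := Out_subf S f g Rq ix (enum S) (fun _ => 0) (fun _ => 0).
  lra.
- move=> h; rewrite Sp; apply: le_trans (Rf1 h) _.
  rewrite lerDl; exact: Out_ge0.
Qed.

Lemma P0_valid S x : (forall i, i \in S -> 0 < x i) -> valid S x (fun i => [:: 0; x i]).
Proof. by move=> H i Hi; rewrite /is_partition /= H // !eqxx. Qed.

Lemma nondeg S x : (forall i, 0 <= x i) -> ~~ [exists i in S, x i == 0] ->
  forall i, i \in S -> 0 < x i.
Proof.
move=> H0 /existsPn Hn i Hi; rewrite lt_def H0 andbT.
by have := Hn i; rewrite Hi.
Qed.

Lemma vf_ge0 h S x : (forall i, 0 <= x i) -> (0 <= vitali_face h S x)%E.
Proof.
move=> H0; rewrite /vitali_face; case: ifP => // Hd.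
have Hx := nondeg H0 (negbT Hd).
apply: le_trans (_ : (grid_sum S h (fun i => [:: 0; x i]))%:E <= _)%E.
  by rewrite lee_fin /grid_sum /=; apply: sumr_ge0 => k _.
apply: ereal_sup_ubound; exists (fun i => [:: 0; x i]); split => //.
exact: P0_valid.
Qed.

Lemma vf_sup h S x : S != finset.set0 -> ~~ [exists i in S, x i == 0] ->
  vitali_face h S x = ereal_sup [set y | exists P, valid S x P /\ y = (GSS S h P)%:E].
Proof.
move=> HS Hd; rewrite /vitali_face (negbTE Hd); congr ereal_sup.
apply: funext => y; apply: propext; split => -[P [HP ->]]; exists P; split => //;
  rewrite grid_GS //; move=> i Hi; by case/and4P: (HP i Hi).
Qed.

Lemma vf_char h S x B : S != finset.set0 -> (forall i, 0 <= x i) ->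
  ~~ [exists i in S, x i == 0] ->
  (forall P, valid S x P -> GSS S h P <= B) ->
  [/\ vitali_face h S x = (fine (vitali_face h S x))%:E,
      (forall P, valid S x P -> GSS S h P <= fine (vitali_face h S x))
    & (forall r, (forall P, valid S x P -> GSS S h P <= r) -> fine (vitali_face h S x) <= r)].
Proof.
move=> HS H0 Hd HB.
have Hx := nondeg H0 Hd.
rewrite vf_sup //.
set E := (X in ereal_sup X).
have ub : forall P, valid S x P -> ((GSS S h P)%:E <= ereal_sup E)%E.
  by move=> P HP; apply: ereal_sup_ubound; exists P.
have le : forall r, (forall P, valid S x P -> GSS S h P <= r) -> (ereal_sup E <= r%:E)%E.
  by move=> r Hr; apply: ge_ereal_sup => y [P [HP ->]]; rewrite lee_fin; apply: Hr.
have lo := ub _ (P0_valid Hx); have hi := le _ HB.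
case Es: (ereal_sup E) lo hi => [s| |] //= lo hi.
split => // [P HP|r Hr].
  by rewrite -lee_fin -Es; apply: ub.
by rewrite -lee_fin -Es; apply: le.
Qed.

End Main.

Section Final.
Variables (R : realType) (d : nat).

Lemma face_fin (h : ('I_d -> R) -> R) S : (var_HK0 h (fun _ => 1%R) < +oo)%E ->
  S != finset.set0 ->
  exists B, forall P, valid S (fun _ => 1%R) P -> GSS S h P <= B.
Proof.
move=> H HS.
have Hd : ~~ [exists i in S, (fun _ : 'I_d => 1%R : R) i == 0].
  by apply/existsPn => i; rewrite oner_eq0 andbF.
have Hle : (vitali_face h S (fun _ => 1%R) <= var_HK0 h (fun _ => 1%R))%E.
  rewrite /var_HK0 (bigD1 S) //=; apply: leeDl; apply: sume_ge0 => T _.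
  by apply: vf_ge0 => i.
have Hlt := le_lt_trans Hle H.
have Hge : (0 <= vitali_face h S (fun _ => 1%R))%E by apply: vf_ge0.
rewrite vf_sup // in Hlt Hge.
move: Hlt Hge; case Es: (ereal_sup _) => [s| |] // _ _.
exists s => P HP; rewrite -lee_fin -Es; apply: ereal_sup_ubound; by exists P.
Qed.

Lemma bound_any (h : ('I_d -> R) -> R) S x : (var_HK0 h (fun _ => 1%R) < +oo)%E ->
  S != finset.set0 -> (forall i, 0 <= x i <= 1) -> (forall i, i \in S -> 0 < x i) ->
  exists B, forall P, valid S x P -> GSS S h P <= B.
Proof.
move=> H HS Hx Hp.
have [B HB] := face_fin H HS.
exists B => P HP.
have Hab : forall i, i \in S -> 0 < x i <= (fun _ => 1%R : R) i.
  by move=> i Hi; rewrite Hp //; case/andP: (Hx i).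
have H1 : @valid R d S (fun _ => 1%R) (fun i => [:: 0; 1]).

  by move=> i Hi; rewrite /is_partition /= ltr01 !eqxx.
have [Rq [Ra [HRq _ _ Hm]]] := key Hab H1 HP HP.
exact: le_trans (Hm h) (HB _ HRq).
Qed.

End Final.

Unset Implicit Arguments.

Theorem lemma1 (R : realType) (d : nat) (f g : ('I_d -> R) -> R)
  (hf : (var_HK0 f (fun _ => 1%R) < +oo)%E)
  (hg : (var_HK0 g (fun _ => 1%R) < +oo)%E)
  (a b : 'I_d -> R)
  (ha : forall i, 0 <= a i <= 1) (hb : forall i, 0 <= b i <= 1)
  (hab : forall i, a i <= b i) :
  (var_HK0 (fun x => (f x + g x)%R) b - var_HK0 (fun x => (f x + g x)%R) a
   <= var_HK0 f b + var_HK0 g b - var_HK0 f a - var_HK0 g a)%E.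
Proof.
set fg := (fun x => f x + g x).
have Bd : forall h, h = f \/ h = g \/ h = fg -> forall S x, S != finset.set0 ->
    (forall i, 0 <= x i <= 1) -> (forall i, i \in S -> 0 < x i) ->
    exists B, forall P, valid S x P -> GSS S h P <= B.
  move=> h [->|[->|->]] S x HS Hx Hp; try exact: bound_any.
  have [B1 HB1] := bound_any hf HS Hx Hp; have [B2 HB2] := bound_any hg HS Hx Hp.
  exists (B1 + B2) => P HP; apply: le_trans (GS_subf _ _ _ _ _ _ _) _.
  exact: lerD (HB1 P HP) (HB2 P HP).
have CH : forall h, h = f \/ h = g \/ h = fg -> forall S x, S != finset.set0 ->
    (forall i, 0 <= x i <= 1) -> ~~ [exists i in S, x i == 0] ->
  [/\ vitali_face h S x = (fine (vitali_face h S x))%:E,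
      (forall P, valid S x P -> GSS S h P <= fine (vitali_face h S x))
    & (forall r, (forall P, valid S x P -> GSS S h P <= r) -> fine (vitali_face h S x) <= r)].
  move=> h Hh S x HS Hx Hd.
  have H0 : forall i, 0 <= x i by move=> i; case/andP: (Hx i).
  have [B HB] := Bd h Hh S x HS Hx (nondeg H0 Hd).
  exact: vf_char HS H0 Hd HB.
have Eq : forall h, h = f \/ h = g \/ h = fg -> forall S x, S != finset.set0 ->
    (forall i, 0 <= x i <= 1) -> vitali_face h S x = (fine (vitali_face h S x))%:E.
  move=> h Hh S x HS Hx; case Hd: [exists i in S, x i == 0].
    by rewrite /vitali_face Hd.
  by case: (CH h Hh S x HS Hx (negbT Hd)).
have hf' : f = f \/ f = g \/ f = fg by left.
have hg' : g = f \/ g = g \/ g = fg by right; left.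
have hfg' : fg = f \/ fg = g \/ fg = fg by right; right.
have ineq : forall S, S != finset.set0 ->
  fine (vitali_face fg S b) - fine (vitali_face fg S a) <=
  fine (vitali_face f S b) + fine (vitali_face g S b)
  - fine (vitali_face f S a) - fine (vitali_face g S a).
  move=> S HS.
  case Db: [exists i in S, b i == 0].
    have Da : [exists i in S, a i == 0].
      case/existsP: Db => i /andP [Hi /eqP Hb0]; apply/existsP; exists i.
      rewrite Hi eq_le; case/andP: (ha i) => -> _; rewrite -Hb0 hab //.
    rewrite /vitali_face Db Da /=; lra.
  have [_ ubf _] := CH f hf' S b HS hb (negbT Db).
  have [_ ubg _] := CH g hg' S b HS hb (negbT Db).
  have [_ _ lefg] := CH fg hfg' S b HS hb (negbT Db).
  case Da: [exists i in S, a i == 0].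
    have Z : forall h, vitali_face h S a = 0%E by move=> h; rewrite /vitali_face Da.
    rewrite !Z /=.
    suff : fine (vitali_face fg S b) <= fine (vitali_face f S b) + fine (vitali_face g S b)
      by lra.
    apply: lefg => P HP; apply: le_trans (GS_subf _ _ _ _ _ _ _) _.
    exact: lerD (ubf P HP) (ubg P HP).
  have [_ ubf' lef'] := CH f hf' S a HS ha (negbT Da).
  have [_ ubg' leg'] := CH g hg' S a HS ha (negbT Da).
  have [_ ubfg' _] := CH fg hfg' S a HS ha (negbT Da).
  have Hab : forall i, i \in S -> 0 < a i <= b i.
    move=> i Hi; rewrite hab andbT.
    by apply: (nondeg _ (negbT Da)) => // j; case/andP: (ha j).
  suff : fine (vitali_face fg S b) <= fine (vitali_face f S b) + fine (vitali_face g S b)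
     + fine (vitali_face fg S a) - fine (vitali_face f S a) - fine (vitali_face g S a)
    by lra.
  apply: lefg => Q HQ.
  suff : fine (vitali_face f S a) <= fine (vitali_face f S b) + fine (vitali_face g S b)
     + fine (vitali_face fg S a) - fine (vitali_face g S a) - GSS S fg Q by lra.
  apply: lef' => P1 H1.
  suff : fine (vitali_face g S a) <= fine (vitali_face f S b) + fine (vitali_face g S b)
     + fine (vitali_face fg S a) - GSS S fg Q - GSS S f P1 by lra.
  apply: leg' => P2 H2.
  have [Rq [Ra [HRq HRa Hk _]]] := key Hab HQ H1 H2.
  have := Hk f g; have := ubf _ HRq; have := ubg _ HRq; have := ubfg' _ HRa.
  rewrite -/fg; lra.
have E : forall h, h = f \/ h = g \/ h = fg -> forall x, (forall i, 0 <= x i <= 1) ->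
    var_HK0 h x = (\sum_(S : {set 'I_d} | S != finset.set0) fine (vitali_face h S x))%:E.
  move=> h Hh x Hx; rewrite /var_HK0 -sumEFin; apply: eq_bigr => S HS; exact: Eq.
rewrite (E _ hfg' _ hb) (E _ hfg' _ ha) (E _ hf' _ hb) (E _ hg' _ hb) (E _ hf' _ ha) (E _ hg' _ ha).
rewrite -EFinD -!EFinB lee_fin.
have H := ler_sum _ ineq.
move: H => /(_ (index_enum _)); rewrite !sumrB big_split /=.
by [].
Qed.
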